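(* Let $b_1,\dots,b_m$ be background frames and $f$ a foreground frame, with a distance $d$ satisfying the triangle inequality and $d(b_j,b_{j+1})\le\delta$ for all $1\le j<m$. Suppose $b_i$ is a strong match for $f$, with $d(f,b_i)$ uniformly distributed on $[0,\Psi]$. Let the window size be $\gamma=\Psi/\delta$, assumed to be an integer with $1\le i-\gamma$ and $i+\gamma\le m$. Then the expected number of strong matches for $f$ in the entire window $b_{i-\gamma},\dots,b_{i+\gamma}$ (of size $2\gamma+1$) is at least $\gamma$.
   Context: A background frame $b$ is a strong match for a foreground frame $f$ if $d(f,b)\le\Psi$, where $\Psi>0$ is a fixed threshold. Randomized model: given that $\{f,b\}$ is a strong match, the distance $d(f,b)$ is modeled as a sample from the uniform distribution on $[0,\Psi]$. *)

(* Defs.v *)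
From HB Require Import structures.
From mathcomp Require Import all_boot all_order all_algebra.
From mathcomp Require Import all_classical all_reals all_analysis.
Set Implicit Arguments. Unset Strict Implicit. Unset Printing Implicit Defensive.
Import Order.TTheory GRing.Theory Num.Theory.
Local Open Scope ring_scope.

Definition strong_match (X : Type) (R : realType) (d : X -> X -> R) (Psi : R)
  (f b : X) : bool := d f b <= Psi.

Definition num_strong_matches (X : Type) (R : realType) (d : X -> X -> R)
  (Psi : R) (f : X) (b : nat -> X) (lo hi : nat) : nat :=
  count (fun j => strong_match d Psi f (b j)) (iota lo (hi.+1 - lo)).

(* Main.v *)
From HB Require Import structures.
From mathcomp Require Import all_boot all_order all_algebra.
From mathcomp Require Import all_classical all_reals all_analysis.
From mathcomp Require Import measurable_realfun.
From mathcomp Require Import ring lra zify.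
Import Order.TTheory GRing.Theory Num.Theory.
Local Open Scope ring_scope.
Local Open Scope classical_set_scope.
Require Import Defs.

Lemma unif_itv (R : realType) (Psi : R) (hP : 0 < Psi) (c : R) :
  0 <= c -> c <= Psi -> uniform_prob hP `[0, c] = (c / Psi)%:E.
Proof.
move=> c0 cP; rewrite /uniform_prob integral_uniform_pdf setIidl; last first.
  by move=> x /=; rewrite !in_itv/= => /andP[-> /le_trans->].
rewrite (eq_integral (fun=> (Psi - 0)^-1%:E)); last first.
  move=> x; rewrite inE/= in_itv/= /uniform_pdf => /andP[x0 xc].
  by rewrite x0 (le_trans xc cP).
rewrite integral_cst//= lebesgue_measure_itv/=.
rewrite lte_fin; case: ifPn => [_|]; first by rewrite -EFinD -EFinM !subr0 mulrC.
move=> /negbTE hc; have c0' : c <= 0 by rewrite leNgt hc.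
 have -> : c = 0 by apply/le_anti; rewrite c0 c0'.
by rewrite mul0r mule0.
Qed.

Lemma sum_dist (g : nat) :
  (\sum_(k < g.*2.+1) ((k - g) + (g - k)) = g * g.+1)%N.
Proof.
elim: g => [|g IH]; first by rewrite big_ord1.
rewrite doubleS big_ord_recl big_ord_recr /=.
rewrite (eq_bigr (fun k : 'I_g.*2.+1 => ((k - g) + (g - k))%N)); last first.
  by move=> k _; rewrite /bump /=; move: (nat_of_ord k) => x; lia.
rewrite IH /bump /=; lia.
Qed.

Lemma chain (X : Type) (R : realType) (d : X -> X -> R)
  (d_tri : forall x y z, d x z <= d x y + d y z)
  (bb : nat -> X) (m : nat) (delta : R)
  (hstep : forall j, (1 <= j)%N -> (j < m)%N -> d (bb j) (bb j.+1) <= delta)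
  (a n : nat) : (1 <= a)%N -> (a + n.+1 <= m)%N ->
  d (bb a) (bb (a + n.+1)%N) <= n.+1%:R * delta.
Proof.
move=> ha; elim: n => [|n IH] hm.
  by rewrite mul1r addn1; apply: hstep => //; rewrite -addn1.
apply: le_trans (d_tri _ (bb (a + n.+1)%N) _) _.
have h1 : (1 <= a + n.+1)%N by lia.
have h2 : (a + n.+1 < m)%N by lia.
have e : (a + n.+2 = (a + n.+1).+1)%N by rewrite addnS.
rewrite e.
apply: le_trans (lerD (IH _) (hstep (a + n.+1)%N h1 h2)) _; first lia.
by rewrite -(natr1 n.+1) mulrDl mul1r.
Qed.
Theorem theorem3p6
  (R : realType) (dT : measure_display) (T : measurableType dT)
  (P : probability T R)
  (X : Type) (d : X -> X -> R)
  (d_ge0 : forall x y, 0 <= d x y)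
  (d_sym : forall x y, d x y = d y x)
  (d_tri : forall x y z, d x z <= d x y + d y z)
  (Psi delta : R) (Psi_gt0 : 0 < Psi) (delta_gt0 : 0 < delta)
  (m i gamma : nat)
  (f : T -> X) (b : T -> nat -> X)
  (hgamma : Psi = gamma%:R * delta)
  (hlo : (1 <= i - gamma)%N) (hhi : (i + gamma <= m)%N)
  (hstep : forall w j, (1 <= j)%N -> (j < m)%N -> d (b w j) (b w j.+1) <= delta)
  (hmeas : forall j, measurable_fun setT (fun w => d (f w) (b w j)))
  (hunif : forall A : set R, measurable A ->
     P ((fun w => d (f w) (b w i)) @^-1` A) = uniform_prob Psi_gt0 A) :
  (gamma%:R%:E <=
   'E_P[fun w => (num_strong_matches d Psi (f w) (b w) (i - gamma) (i + gamma))%:R])%E.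

Proof.
have hgi : (gamma < i)%N by lia.
have hn : ((i + gamma).+1 - (i - gamma) = gamma.*2.+1)%N by lia.
pose lo := (i - gamma)%N.
pose S := fun j => (fun w => d (f w) (b w j)) @^-1` `]-oo, Psi].
have mS : forall j, measurable (S j).
  move=> j; have := hmeas j measurableT `]-oo, Psi] (measurable_itv _).
  by rewrite setTI.
pose c := fun k : nat => Psi - ((k - gamma) + (gamma - k))%N%:R * delta.
pose A := fun k => (fun w => d (f w) (b w i)) @^-1` `[0, c k].
have mA : forall k, measurable (A k).
  move=> k; have := hmeas i measurableT `[0, c k] (measurable_itv _).
  by rewrite setTI.
have cle : forall k, c k <= Psi.
  move=> k; rewrite /c lerBlDr lerDl; apply: mulr_ge0 => //; exact: ltW.
have cge : forall k, (k < gamma.*2.+1)%N -> 0 <= c k.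
  move=> k hk; rewrite /c hgamma -mulrBl; apply: mulr_ge0; last exact: ltW.
  by rewrite subr_ge0 ler_nat; lia.
have key : forall w k, (k < gamma.*2.+1)%N -> d (f w) (b w i) <= c k ->
    d (f w) (b w (lo + k)%N) <= Psi.
  move=> w k hk; rewrite /c; have [kg|kg|kg] := ltngtP k gamma.
  - have e1 : (k - gamma = 0)%N by lia.
    have e2 : (gamma - k = (gamma - k - 1).+1)%N by lia.
    have ej : (lo + k + (gamma - k - 1).+1 = i)%N by rewrite /lo; lia.
    rewrite e1 e2 add0n => hD.
    have h1 : (1 <= lo + k)%N by rewrite /lo; lia.
    have h2 : (lo + k + (gamma - k - 1).+1 <= m)%N by rewrite ej; lia.
    have := @chain _ _ _ d_tri (b w) m delta (hstep w) _ _ h1 h2; rewrite ej => hc.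
    apply: le_trans (d_tri _ (b w i) _) _; rewrite (d_sym (b w i)).
    set y := _%:R * delta in hD hc; lra.
  - have e1 : (gamma - k = 0)%N by lia.
    have e2 : (k - gamma = (k - gamma - 1).+1)%N by lia.
    have ej : (i + (k - gamma - 1).+1 = lo + k)%N by rewrite /lo; lia.
    rewrite e1 e2 addn0 => hD.
    have h1 : (1 <= i)%N by lia.
    have h2 : (i + (k - gamma - 1).+1 <= m)%N by rewrite /lo; lia.
    have := @chain _ _ _ d_tri (b w) m delta (hstep w) _ _ h1 h2; rewrite ej => hc.
    apply: le_trans (d_tri _ (b w i) _) _.
    set y := _%:R * delta in hD hc; lra.
  - have ej : (lo + k = i)%N by rewrite /lo; lia.
    by rewrite ej kg !subnn mul0r subr0.
have E1 : ('E_P[fun w => (num_strong_matches d Psi (f w) (b w) (i - gamma) (i + gamma))%:R]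
   = \sum_(k < gamma.*2.+1) P (S (lo + k)%N))%E.
  rewrite unlock.
  transitivity (\int[P]_w (\sum_(k < gamma.*2.+1) (\1_(S (lo + k)%N) w)%:E))%E.
    apply: eq_integral => w _.
    rewrite /num_strong_matches hn sumEFin; congr EFin.
    rewrite (_ : iota (i - gamma) _ = map (addn lo) (iota 0 gamma.*2.+1));
      last by rewrite -iotaDl addn0.
    rewrite -sum1_count big_mkcond natr_sum big_map.
    rewrite -(big_mkord xpredT (fun k => (\1_(S (lo + k)%N) w))) /index_iota subn0.
    apply: eq_bigr => k _; rewrite indicE /strong_match.
    have -> : (w \in S (lo + k)%N) = (d (f w) (b w (lo + k)%N) <= Psi).
      by apply/idP/idP; rewrite inE /S /= in_itv /=.
    by case: ifP.
  rewrite ge0_integral_sum //.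
  - apply: eq_bigr => k _; rewrite integral_indic // setIT //.
  - by move=> k; apply/measurable_EFinP; apply: measurable_indic.
rewrite E1.
apply: (@le_trans _ _ (\sum_(k < gamma.*2.+1) P (A k))%E); last first.
  apply: lee_sum => k _; apply: le_measure; rewrite ?inE //.
  move=> w; rewrite /A /S /= !in_itv /= => /andP[h0 h1].
  by apply: key => //.
rewrite (eq_bigr (fun k : 'I_gamma.*2.+1 => (c k / Psi)%:E)); last first.
  by move=> k _; rewrite hunif ?unif_itv //; apply: cge.
rewrite sumEFin lee_fin -mulr_suml ler_pdivlMr //.
rewrite /c sumrB sumr_const card_ord -mulr_suml -natr_sum.
rewrite (eq_bigr (fun k : 'I_gamma.*2.+1 => ((k - gamma) + (gamma - k))%N%:R)); last by move=> k _; rewrite natn.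
rewrite -natr_sum sum_dist hgamma natn -[X in _ <= X - _]mulr_natr.
have e1 : (gamma.*2.+1)%:R = 2 * gamma%:R + 1 :> R by rewrite -mul2n -addn1 natrD natrM.
have e2 : (gamma * gamma.+1)%:R = gamma%:R * (gamma%:R + 1) :> R by rewrite natrM -addn1 natrD.
rewrite e1 e2; rewrite le_eqVlt; apply/orP; left; apply/eqP; ring.
Qed.
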